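(* Let $M$ be a regular indecomposable representation of $(T(n),\Omega)$ which is a sink module with center $c$ and radius $r$. Then $d(M)-2\le d(\sigma M)\le d(M)$, and exactly one of the following holds: (1) $d(\sigma M)=d(M)-2$; this happens if and only if $\sigma M$ is a sink module, if and only if $M$ is complete; in this case the center of $\sigma M$ is $c$. (2) $d(\sigma M)=d(M)-1$; this happens if and only if $\sigma M$ is a flow module; in this case the center of $\sigma M$ is an edge $\{c,c'\}$ such that there is a path $(x_0,x_1,\dots,x_r)$ in $T(n)$ with $x_0=c$, $x_1=c'$ and $x_r$ a source of $\sigma\Omega$. (3) $d(\sigma M)=d(M)$; this happens if and only if $\sigma M$ is a source module; in this case the center of $\sigma M$ is $c$.
   Context: Let $k$ be a field and $n\ge 3$. $T(n)$ is the $n$-regular tree; fix a bipartite orientation $\Omega$ (every vertex a sink or a source), $\sigma\Omega$ the opposite orientation. A module is a finite-dimensional $k$-representation of $(T(n),\Omega)$ or $(T(n),\sigma\Omega)$. The shift functor $\sigma$ is the composition of the Bernstein–Gelfand–Ponomarev reflection functors at all sinks, sending representations of $(T(n),\Omega)$ to representations of $(T(n),\sigma\Omega)$ and vice versa. An indecomposable module $M$ is regular if $\sigma^tM\neq 0$ for all $t\in\mathbb Z$ ($\sigma^t$ for $t<0$ being powers of the left adjoint $\sigma^-$). A path of length $t$ is a sequence $(a_0,\dots,a_t)$ of vertices, consecutive ones neighbours, with $a_{i-1}\neq a_{i+1}$; a path of length $2r$ has center $a_r$, radius $r$; a path of length $2r+1$ has center the edge $\{a_r,a_{r+1}\}$,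 radius $r$. For indecomposable $M$, $T(M)$ is the full subgraph on vertices $a$ with $M_a\neq0$; a diameter path is a path in $T(M)$ of maximal length $d(M)$; all diameter paths share a center, the center of $M$; $r(M)=\lfloor d(M)/2\rfloor$. $M$ is a sink (resp. source) module if its diameter paths start and end at sinks (resp. sources) of the orientation of its quiver, and a flow module if $d(M)$ is odd. A sink module $M$ with center $p$ and radius $r$ is complete if $r\ge1$ and for every path $(x(0),x(1),\dots,x(r))$ in $T(n)$ with $x(r)=p$ and $x(1),\dots,x(r)$ vertices of $T(M)$, one has $\dim M_{x(0)}=\dim M_{x(1)}$. *)

(* Defs.v *)
From HB Require Import structures.
From mathcomp Require Import all_boot all_order all_algebra.
Set Implicit Arguments. Unset Strict Implicit. Unset Printing Implicit Defensive.
Import Order.TTheory GRing.Theory Num.Theory.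
Local Open Scope ring_scope.

(* The n-regular tree T(n): vertices are reduced words over 'I_n (no two    *)
(* consecutive letters equal), i.e. elements of the free product of n      *)
(* copies of Z/2; the i-th neighbour of a word s is s with letter i         *)
(* multiplied on the left.                                                  *)
Definition reduced (n : nat) (s : seq 'I_n) : bool :=
  sorted (fun a b : 'I_n => a != b) s.

Definition V (n : nat) := {s : seq 'I_n | reduced s}.

Definition nbr_seq (n : nat) (i : 'I_n) (s : seq 'I_n) : seq 'I_n :=
  if s is a :: s' then (if a == i then s' else i :: s) else [:: i].

Lemma nbr_reduced (n : nat) (i : 'I_n) (s : seq 'I_n) :
  reduced s -> reduced (nbr_seq i s).
Proof.
case: s => [|a s] //= Hs.
case: eqP => [_|/eqP Hai].
  by move: Hs; rewrite /reduced /=; apply: path_sorted.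
by rewrite /reduced /= eq_sym Hai.
Qed.

Definition vroot (n : nat) : V n := exist _ [::] isT.

Definition vnbr (n : nat) (x : V n) (i : 'I_n) : V n :=
  exist _ (nbr_seq i (val x)) (nbr_reduced i (valP x)).

Definition adj (n : nat) (x y : V n) : bool := [exists i : 'I_n, vnbr x i == y].

(* Bipartite orientations: the orientation [b] has as sinks exactly the     *)
(* vertices x with odd (size x) == b, all other vertices being sources.     *)
(* Omega corresponds to some b, and sigma Omega to ~~ b.                   *)
Definition sinkb (n : nat) (b : bool) (x : V n) : bool := odd (size (val x)) == b.

Definition arrow (n : nat) (b : bool) (x y : V n) : bool := adj x y && sinkb b y.

(* Representations: a vector space k^(rdim x) at each vertex, and for each  *)
(* ordered pair (x,y) a matrix acting on row vectors (v |-> v *m rmap x y); *)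
(* only the matrices on arrows of the orientation under consideration are  *)
(* relevant, the others are ignored by all definitions below.              *)
Record rep (K : fieldType) (n : nat) := Rep {
  rdim : V n -> nat;
  rmap : forall x y : V n, 'M[K]_(rdim x, rdim y) }.

Section Reps.
Variables (K : fieldType) (n : nat).

Definition fin_supp (M : rep K n) : Prop :=
  exists s : seq (V n), forall x, rdim M x != 0%N -> x \in s.

Definition nonzero_rep (M : rep K n) : Prop := exists x, rdim M x != 0%N.

(* subrepresentations of a representation of orientation b, given by a     *)
(* subspace (row space of a square matrix) at each vertex                   *)
Definition subrep (b : bool) (M : rep K n) (U : forall x, 'M[K]_(rdim M x)) : Prop :=
  forall x y, arrow b x y -> (U x *m rmap M x y <= U y)%MS.

Definition decomposable (b : bool) (M : rep K n) : Prop :=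
  exists (U W : forall x, 'M[K]_(rdim M x)),
    [/\ @subrep b M U, @subrep b M W,
        forall x, (U x :&: W x <= (0 : 'M[K]_(rdim M x)))%MS && (1%:M <= U x + W x)%MS,
        exists x, U x != 0 & exists x, W x != 0].

Definition indecomposable (b : bool) (M : rep K n) : Prop :=
  nonzero_rep M /\ ~ decomposable b M.

Definition mxresize (m1 n1 m2 n2 : nat) (A : 'M[K]_(m1, n1)) : 'M[K]_(m2, n2) :=
  \matrix_(i < m2, j < n2)
     match (insub (val i) : option 'I_m1), (insub (val j) : option 'I_n1) with
     | Some i0, Some j0 => A i0 j0
     | _, _ => 0
     end.

Definition inmx (M : rep K n) (x : V n) :
  'M[K]_(\sum_(i < n) rdim M (vnbr x i), rdim M x) :=
  \mxcol_(i < n) rmap M (vnbr x i) x.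

Definition outmx (M : rep K n) (x : V n) :
  'M[K]_(rdim M x, \sum_(i < n) rdim M (vnbr x i)) :=
  \mxrow_(i < n) rmap M x (vnbr x i).

Definition kerB (M : rep K n) (x : V n) := row_base (kermx (inmx M x)).

(* a map (+) M_u -> C (C of dimension = that of the cokernel of outmx),     *)
(* surjective with kernel the image of outmx: the cokernel projection       *)
Definition cokQ (M : rep K n) (x : V n) := (row_base (cokermx (outmx M x))^T)^T.

(* sigma: BGP reflection at all sinks of orientation b; the result is a     *)
(* representation of orientation ~~ b.                                      *)
Definition sigma (b : bool) (M : rep K n) : rep K n :=
  @Rep K n
    (fun x => if sinkb b x then \rank (kermx (inmx M x)) else rdim M x)
    (fun x y => if sinkb b x then
                  (if [pick i | vnbr x i == y] is Some i
                   then @mxresize _ _ _ _ (submxrow (kerB M x) i) else 0)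
                else 0).

(* sigma^- : BGP reflection at all sources of orientation b; the result is  *)
(* a representation of orientation ~~ b.                                    *)
Definition sigmam (b : bool) (M : rep K n) : rep K n :=
  @Rep K n
    (fun x => if ~~ sinkb b x then \rank ((cokermx (outmx M x))^T) else rdim M x)
    (fun y x => if ~~ sinkb b x then
                  (if [pick i | vnbr x i == y] is Some i
                   then @mxresize _ _ _ _ (submxcol (cokQ M x) i) else 0)
                else 0).

Fixpoint sigma_pow (k : nat) (b : bool) (M : rep K n) : rep K n :=
  if k is k'.+1 then sigma_pow k' (~~ b) (sigma b M) else M.

Fixpoint sigmam_pow (k : nat) (b : bool) (M : rep K n) : rep K n :=
  if k is k'.+1 then sigmam_pow k' (~~ b) (sigmam b M) else M.

Definition regular (b : bool) (M : rep K n) : Prop :=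
  forall k : nat, nonzero_rep (sigma_pow k b M) /\ nonzero_rep (sigmam_pow k b M).

(* vertices.                                                                *)
Definition tpath (p : seq (V n)) : bool :=
  [&& p != [::], path (@adj n) (head (vroot n) p) (behead p) &
      all (fun i => nth (vroot n) p i != nth (vroot n) p i.+2) (iota 0 (size p - 2))].

Definition supp_path (M : rep K n) (p : seq (V n)) : bool :=
  tpath p && all (fun v => rdim M v != 0%N) p.

Definition diam_path (M : rep K n) (p : seq (V n)) : Prop :=
  supp_path M p /\ forall q, supp_path M q -> (size q <= size p)%N.

Definition is_diam (M : rep K n) (d : nat) : Prop :=
  (exists p, supp_path M p /\ size p = d.+1)%N /\
  forall p, supp_path M p -> (size p <= d.+1)%N.

Definition pfirst (p : seq (V n)) := nth (vroot n) p 0.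
Definition plast (p : seq (V n)) := nth (vroot n) p (size p).-1.

Definition sink_module (b : bool) (M : rep K n) : Prop :=
  forall p, diam_path M p -> sinkb b (pfirst p) && sinkb b (plast p).
Definition source_module (b : bool) (M : rep K n) : Prop :=
  forall p, diam_path M p -> ~~ sinkb b (pfirst p) && ~~ sinkb b (plast p).
Definition flow_module (M : rep K n) : Prop :=
  exists d, is_diam M d /\ odd d.

Definition vcenter (M : rep K n) (c : V n) : Prop :=
  forall p, diam_path M p ->
    ~~ odd (size p).-1 /\ nth (vroot n) p ((size p).-1./2) = c.

Definition ecenter (M : rep K n) (c c' : V n) : Prop :=
  forall p, diam_path M p ->
    odd (size p).-1 /\
    let r := ((size p).-1)./2 in
    ((nth (vroot n) p r = c /\ nth (vroot n) p r.+1 = c') \/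
     (nth (vroot n) p r = c' /\ nth (vroot n) p r.+1 = c)).

Definition complete (M : rep K n) (c : V n) (r : nat) : Prop :=
  (1 <= r)%N /\
  forall p : seq (V n), tpath p -> size p = r.+1 -> nth (vroot n) p r = c ->
    (forall i, (1 <= i <= r)%N -> rdim M (nth (vroot n) p i) != 0%N) ->
    rdim M (nth (vroot n) p 0) = rdim M (nth (vroot n) p 1).

End Reps.

(* Main.v *)
Require Import Defs.
From HB Require Import structures.
From mathcomp Require Import all_boot all_order all_algebra.
From mathcomp Require Import zify.
From Stdlib Require Import Classical_Prop.
Set Implicit Arguments. Unset Strict Implicit. Unset Printing Implicit Defensive.

Section Tree.
Variable n : nat.
Implicit Types (x z v : V n) (s t u : seq 'I_n).

Lemma red_cons (a : 'I_n) s : reduced (a :: s) -> reduced s /\ (if s is a' :: _ then a != a' else true).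
Proof.
rewrite /reduced /=; case: s => [|a' s] //= /andP[H1 H2]; by split.
Qed.

Lemma nbr_invol (i : 'I_n) s : reduced s -> nbr_seq i (nbr_seq i s) = s.
Proof.
case: s => [|a s] /=; first by rewrite eqxx.
case: eqP => [->|/eqP ai] Hs.
  case: s Hs => [|a' s] //= /andP[H _].
  by rewrite eq_sym (negbTE H).
by rewrite /= eqxx.
Qed.

Lemma foldr_red w s : reduced w -> reduced (foldr (@nbr_seq n) w s).
Proof. by move=> Hw; elim: s => [|a s IH] //=; apply: nbr_reduced. Qed.

Lemma foldr_nbr w y (a : 'I_n) : reduced w -> reduced y ->
  foldr (@nbr_seq n) w (nbr_seq a y) = nbr_seq a (foldr (@nbr_seq n) w y).
Proof.
move=> Hw; case: y => [|a' y] //= Hy.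
case: eqP => [->|//]; rewrite nbr_invol //; exact: foldr_red.
Qed.

Lemma foldr_assoc w u s : reduced w -> reduced u ->
  foldr (@nbr_seq n) w (foldr (@nbr_seq n) u s) = foldr (@nbr_seq n) (foldr (@nbr_seq n) w u) s.
Proof.
move=> Hw Hu; elim: s => [|a s IH] //=.
by rewrite foldr_nbr // ?IH //; apply: foldr_red.
Qed.

Lemma foldr_cancel s t : reduced t -> foldr (@nbr_seq n) (foldr (@nbr_seq n) t s) (rev s) = t.
Proof.
elim: s t => [|a s IH] t Ht //=.
by rewrite rev_cons foldr_rcons nbr_invol ?IH //; apply: foldr_red.
Qed.

Lemma foldr_nil_red s : reduced s -> foldr (@nbr_seq n) [::] s = s.
Proof.
elim: s => [|a s IH] //= Hs.
have [Hs' H] := red_cons Hs.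
rewrite IH //; case: s {IH Hs Hs'} H => [|a' s] //= H.
by rewrite eq_sym (negbTE H).
Qed.

Definition tau z x := foldr (@nbr_seq n) (foldr (@nbr_seq n) [::] (rev (val z))) (val x).
Definition ht z x := size (tau z x).
Definition par z x := if tau z x is a :: _ then vnbr x a else x.

Lemma base_red z : reduced (foldr (@nbr_seq n) [::] (rev (val z))).
Proof. exact: foldr_red. Qed.

Lemma tau_red z x : reduced (tau z x).
Proof. exact: foldr_red (base_red z). Qed.

Lemma tau_nbr z x i : tau z (vnbr x i) = nbr_seq i (tau z x).
Proof. by rewrite /tau /= foldr_nbr //; [apply: base_red | apply: valP]. Qed.

Lemma tau_root z : tau z z = [::].
Proof. by rewrite /tau -{2}(revK (val z)) foldr_cancel. Qed.

Lemma tau_inv z x : foldr (@nbr_seq n) (val z) (tau z x) = val x.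
Proof.
rewrite /tau foldr_assoc ?base_red ?(valP z) //.
rewrite foldr_assoc ?(valP z) //=.
rewrite -{1}(foldr_nil_red (valP z)) foldr_cancel //.
exact: foldr_nil_red (valP x).
Qed.

Lemma tau_inj z : injective (tau z).
Proof. by move=> x y H; apply: val_inj; rewrite -(tau_inv z x) H tau_inv. Qed.

Lemma tau_nil z x : (tau z x == [::]) = (x == z).
Proof.
apply/eqP/eqP => [H|->]; last exact: tau_root.
by apply: (@tau_inj z); rewrite H tau_root.
Qed.

Lemma ht0 z x : (ht z x == 0)%N = (x == z).
Proof. by rewrite /ht size_eq0 tau_nil. Qed.

Lemma vnbr_invol x i : vnbr (vnbr x i) i = x.
Proof. by apply: val_inj => /=; rewrite nbr_invol //; apply: valP. Qed.

Lemma adjP x y : reflect (exists i, vnbr x i = y) (adj x y).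
Proof.
apply: (iffP existsP) => [[i /eqP H]|[i H]]; exists i => //; exact/eqP.
Qed.

Lemma adj_vnbr x i : adj x (vnbr x i).
Proof. by apply/adjP; exists i. Qed.

Lemma adj_sym x y : adj x y -> adj y x.
Proof. by case/adjP => i <-; apply/adjP; exists i; rewrite vnbr_invol. Qed.

Lemma par_root z : par z z = z.
Proof. by rewrite /par tau_root. Qed.

Lemma tau_par z x : x != z -> tau z (par z x) = behead (tau z x).
Proof.
rewrite -tau_nil /par; case E: (tau z x) => [|a t] // _.
by rewrite tau_nbr E /= eqxx.
Qed.

Lemma ht_par z x : ht z (par z x) = (ht z x).-1.
Proof.
have [->|H] := eqVneq x z; first by rewrite par_root /ht tau_root.
by rewrite /ht tau_par // size_behead.
Qed.

Lemma adj_par z x : x != z -> adj x (par z x).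
Proof. by rewrite -tau_nil /par; case: (tau z x) => [|a t] // _; apply: adj_vnbr. Qed.

Lemma adj_cases z x y : adj x y ->
  (x != z /\ y = par z x) \/ (y != z /\ x = par z y).
Proof.
case/adjP => i <-.
have Hx := tau_nbr z x i.
rewrite -!tau_nil /par Hx.
case E: (tau z x) => [|a t] /=.
  by right; split => //; rewrite vnbr_invol.
have [Hai|Hai] := eqVneq a i.
  by subst a; left.
by right; split; [done | rewrite vnbr_invol].
Qed.

Lemma adj_ht z x y : adj x y ->
  (x != z /\ y = par z x /\ (ht z y).+1 = ht z x) \/
  (y != z /\ x = par z y /\ (ht z x).+1 = ht z y).
Proof.
case/(adj_cases z) => [[H1 H2]|[H1 H2]]; [left|right]; do 2 split => //.
  by rewrite H2 ht_par prednK // lt0n ht0.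
by rewrite H2 ht_par prednK // lt0n ht0.
Qed.

Lemma odd_nbr (i : 'I_n) s : odd (size (nbr_seq i s)) = ~~ odd (size s).
Proof. by case: s => [|a s] //=; case: eqP => //=; rewrite negbK. Qed.

Lemma sinkb_adj b x y : adj x y -> sinkb b y = ~~ sinkb b x.
Proof.
case/adjP => i <-; rewrite /sinkb /= odd_nbr.
by case: (odd _); case: b.
Qed.

Lemma sinkb_neg b x : sinkb (~~ b) x = ~~ sinkb b x.
Proof. by rewrite /sinkb; case: (odd _); case: b. Qed.

Lemma iter_par_ht z k x : ht z (iter k (par z) x) = (ht z x - k)%N.
Proof. by elim: k => [|k IH] /=; rewrite ?subn0 // ht_par IH subnS. Qed.

Lemma iter_par_root z x : iter (ht z x) (par z) x = z.
Proof. by apply/eqP; rewrite -ht0 iter_par_ht subnn. Qed.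

Definition descb z v x := (ht z v <= ht z x)%N && (iter (ht z x - ht z v) (par z) x == v).

Lemma descb_refl z v : descb z v v.
Proof. by rewrite /descb leqnn subnn /=. Qed.

Lemma descb_root z v : v != z -> descb z v z = false.
Proof.
by rewrite -ht0 /descb /ht tau_root /= leqn0 => /negbTE ->.
Qed.

Lemma descb_step z v x : x != z -> descb z v x = (x == v) || descb z v (par z x).
Proof.
move=> Hx; have Hh : (0 < ht z x)%N by rewrite lt0n ht0.
have [->|Hxv] := eqVneq x v; first by rewrite descb_refl.
rewrite /descb ht_par.
case: (ltngtP (ht z v) (ht z x)) => H.
- have -> : (ht z v <= (ht z x).-1)%N = true by apply/idP; lia.
  have -> : (ht z x - ht z v = ((ht z x).-1 - ht z v).+1)%N by lia.
  by rewrite iterSr.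
- have -> : (ht z v <= (ht z x).-1)%N = false by apply/negbTE; lia.
  done.
- have -> : (ht z v <= (ht z x).-1)%N = false by apply/negbTE; lia.
  by rewrite H subnn /= (negbTE Hxv).
Qed.

Lemma descb_edge z v x y : adj x y -> v != z ->
  ~~ ((x == v) && (y == par z v)) -> ~~ ((y == v) && (x == par z v)) ->
  descb z v x = descb z v y.
Proof.
move=> Hxy Hv H1 H2; have [[Hx Ey]|[Hy Ex]] := adj_cases z Hxy.
  rewrite Ey (descb_step v Hx); have [E|E] := eqVneq x v; last by [].
  by move: H1; rewrite Ey E !eqxx.
rewrite Ex (descb_step v Hy); have [E|E] := eqVneq y v; last by [].
by move: H2; rewrite Ex E !eqxx.
Qed.

End Tree.


Section Paths.
Variable n : nat.
Implicit Types (x z v : V n).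

Definition fpth (f : nat -> V n) (L : nat) :=
  (forall i, (i < L)%N -> adj (f i) (f i.+1)) /\ (forall i, (i.+1 < L)%N -> f i != f i.+2).

Lemma tpath_fpath (p : seq (V n)) : tpath p -> fpth (nth (vroot n) p) (size p).-1.
Proof.
case/and3P; case: p => [|a p] //= _ Hp /allP Ha; split.
  move=> i Hi; move/(pathP (vroot n)): Hp => /(_ i Hi).
  by case: i Hi.
move=> i Hi; apply: (Ha i); rewrite mem_iota /=; lia.
Qed.

Lemma tpathI (p : seq (V n)) : p != [::] ->
  (forall i, (i.+1 < size p)%N -> adj (nth (vroot n) p i) (nth (vroot n) p i.+1)) ->
  (forall i, (i.+2 < size p)%N -> nth (vroot n) p i != nth (vroot n) p i.+2) ->
  tpath p.
Proof.
case: p => [|a p] //= _ H1 H2; apply/and3P; split => //.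
  apply/(pathP (vroot n)) => i Hi.
  by move: (H1 i); rewrite /= ltnS; apply.
apply/allP => i; rewrite mem_iota => /andP[_ Hi]; apply: H2; move: Hi; rewrite /=; lia.
Qed.

Lemma fpth_tpath (f : nat -> V n) L : fpth f L -> tpath (mkseq f L.+1).
Proof.
case=> H1 H2; apply: tpathI => //; rewrite size_mkseq => i Hi; rewrite !nth_mkseq;
  try lia; [apply: H1|apply: H2]; lia.
Qed.

Lemma fpth_mon f L L' : (L' <= L)%N -> fpth f L -> fpth f L'.
Proof.
move=> HL [H1 H2]; split => i Hi; [apply: H1|apply: H2]; lia.
Qed.

Lemma fpth_ext f g L : (forall i, (i <= L)%N -> f i = g i) -> fpth f L -> fpth g L.
Proof.
move=> E [H1 H2]; split => i Hi; rewrite -!E; try lia; [apply: H1|apply: H2]; lia.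
Qed.

Lemma fpth_rev f L : fpth f L -> fpth (fun i => f (L - i)%N) L.
Proof.
case=> H1 H2; split => i Hi.
  have -> : (L - i = (L - i.+1).+1)%N by lia.
  apply: adj_sym; apply: H1; lia.
have -> : (L - i = (L - i.+2).+2)%N by lia.
rewrite eq_sym; apply: H2; lia.
Qed.

Definition downstep z (f : nat -> V n) i := f i != z /\ f i.+1 = par z (f i).
Definition upstep z (f : nat -> V n) i := f i.+1 != z /\ f i = par z (f i.+1).

Lemma valley z f L : fpth f L -> exists k, [/\ (k <= L)%N,
  (forall i, (i < k)%N -> downstep z f i) &
  (forall i, (k <= i < L)%N -> upstep z f i)].
Proof.
elim: L => [|L IH] HL.
  by exists 0%N; split => // i; lia.
have [k [Hk Hd Hu]] := IH (fpth_mon (leqnSn L) HL).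
case: HL => HA HB.
have [Hs|Hs] := adj_cases z (HA L (ltnSn L)).
  have [Ek|Ek] := boolP (k == L).
    exists L.+1; split => // i Hi; last lia.
    have [->|Hi'] := eqVneq i L; first exact: Hs.
    by apply: Hd; rewrite (eqP Ek); lia.
  exfalso.
  have [H1 H2] := Hu L.-1 ltac:(lia).
  have E : L.-1.+1 = L by lia.
  rewrite E in H1 H2.
  case: Hs => Hs1 Hs2.
  move: (HB L.-1 ltac:(lia)); rewrite E H2 Hs2 eqxx //.
exists k; split => //; first lia.
move=> i Hi; have [->|Hi'] := eqVneq i L; first exact: Hs.
apply: Hu; lia.
Qed.

Lemma downstep_ht z f i : downstep z f i -> (ht z (f i.+1)).+1 = ht z (f i).
Proof. by case=> H ->; rewrite ht_par prednK // lt0n ht0. Qed.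

Lemma upstep_ht z f i : upstep z f i -> (ht z (f i)).+1 = ht z (f i.+1).
Proof. by case=> H ->; rewrite ht_par prednK // lt0n ht0. Qed.

Lemma valley_ht z f L k : (k <= L)%N ->
  (forall i, (i < k)%N -> downstep z f i) ->
  (forall i, (k <= i < L)%N -> upstep z f i) ->
  (forall i, (i <= k)%N -> ht z (f i) + i = ht z (f 0))%N /\
  (forall i, (k <= i <= L)%N -> ht z (f i) = ht z (f k) + (i - k))%N.
Proof.
move=> HkL Hd Hu; split.
  elim=> [|i IH] Hi; first by rewrite addn0.
  rewrite -IH; last lia.
  have := downstep_ht (Hd i Hi); lia.
move=> i /andP[H1 H2]; move: H2; elim: i H1 => [|i IH] H1 H2.
  have E : k = 0%N by lia. by rewrite E subnn addn0.
have [E|Hik] := eqVneq k i.+1; first by rewrite E subnn addn0.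
rewrite (subSn (_ : k <= i)%N); last lia.
rewrite addnS -IH; try lia.
by rewrite (upstep_ht (Hu i _)) //; lia.
Qed.

End Paths.


Section Reps3.
Variables (K : fieldType) (n : nat).
Local Open Scope ring_scope.
Implicit Types (x z v : V n).

Lemma mxresize_id m1 n1 (A : 'M[K]_(m1, n1)) : mxresize m1 n1 A = A.
Proof. by apply/matrixP => i j; rewrite mxE !valK. Qed.

Lemma mul_dim0 (m p q : nat) (A : 'M[K]_(m, p)) (B : 'M[K]_(p, q)) (C : 'M[K]_q) :
  (p == 0)%N || (q == 0)%N -> (A *m B <= C)%MS.
Proof.
case/orP => /eqP E; subst.
  by rewrite (flatmx0 B) mulmx0 sub0mx.
by rewrite (thinmx0 (A *m B)) sub0mx.
Qed.

Lemma one_neq0 m : m != 0%N -> (1%:M : 'M[K]_m) != 0.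
Proof. by rewrite -mxrank_eq0 mxrank1. Qed.

Lemma vnbr_tau x i : tau x (vnbr x i) = [:: i].
Proof. by rewrite tau_nbr tau_root. Qed.

Lemma vnbr_neq x i : vnbr x i != x.
Proof. by rewrite -(tau_nil x) vnbr_tau. Qed.

Lemma vnbr_inj x : injective (vnbr x).
Proof. by move=> i j E; have := vnbr_tau x i; rewrite E vnbr_tau => -[]. Qed.

Lemma par_vnbr x i : par x (vnbr x i) = x.
Proof. by rewrite /par vnbr_tau vnbr_invol. Qed.

Lemma descb_vnbr x i j : descb x (vnbr x j) (vnbr x i) = (i == j).
Proof.
rewrite /descb /ht !vnbr_tau leqnn subnn /=.
by apply/eqP/eqP => [/vnbr_inj|->].
Qed.

Lemma sink_no_out b x y : sinkb b x -> ~~ arrow b x y.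
Proof.
move=> Hx; apply/negP => /andP[Ha Hy].
by move: Hy; rewrite (sinkb_adj b Ha) Hx.
Qed.

Lemma rs_source b (M : rep K n) v : ~~ sinkb b v -> rdim (sigma b M) v = rdim M v.
Proof. by move=> H; rewrite /= (negbTE H). Qed.

Lemma rs_sink b (M : rep K n) v : sinkb b v ->
  rdim (sigma b M) v = (\sum_(i < n) rdim M (vnbr v i) - \rank (inmx M v))%N.
Proof. by move=> H; rewrite /= H mxrank_ker. Qed.

Lemma rs_le b (M : rep K n) v : sinkb b v ->
  (rdim (sigma b M) v <= \sum_(i < n) rdim M (vnbr v i))%N.
Proof. by move=> H; rewrite rs_sink // leq_subr. Qed.

Lemma supp_par b (M : rep K n) z v : indecomposable b M -> rdim M z != 0%N ->
  rdim M v != 0%N -> v != z -> rdim M (par z v) != 0%N.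
Proof.
move=> [_ Hind] Hz Hv Hvz; apply: contraT; rewrite negbK => /eqP Hw; exfalso; apply: Hind.
pose P := descb z v.
exists (fun x => if P x then 1%:M else 0), (fun x => if P x then 0 else 1%:M); split.
- move=> x y Hxy; have Hadj : adj x y := (andP Hxy).1.
  have [E|E] := boolP ((rdim M x == 0)%N || (rdim M y == 0)%N); first exact: mul_dim0.
  move: E; rewrite negb_or => /andP[Hx Hy].
  have -> : P x = P y.
    apply: descb_edge => //; apply/negP => /andP[/eqP E1 /eqP E2].
      by move: Hy; rewrite E2 Hw.
    by move: Hx; rewrite E2 Hw.
  by case: (P y); [rewrite submx1 | rewrite mul0mx sub0mx].
- move=> x y Hxy; have Hadj : adj x y := (andP Hxy).1.
  have [E|E] := boolP ((rdim M x == 0)%N || (rdim M y == 0)%N); first exact: mul_dim0.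
  move: E; rewrite negb_or => /andP[Hx Hy].
  have -> : P x = P y.
    apply: descb_edge => //; apply/negP => /andP[/eqP E1 /eqP E2].
      by move: Hy; rewrite E2 Hw.
    by move: Hx; rewrite E2 Hw.
  by case: (P y); [rewrite mul0mx sub0mx | rewrite submx1].
- move=> x; case: (P x).
    by rewrite capmx0 sub0mx addsmxSl.
  by rewrite cap0mx sub0mx addsmxSr.
- by exists v; rewrite /P descb_refl; apply: one_neq0.
- by exists z; rewrite /P descb_root //; apply: one_neq0.
Qed.

Lemma sub_inmx (M : rep K n) x i : (rmap M (vnbr x i) x <= inmx M x)%MS.
Proof.
rewrite -[X in (X <= _)%MS](mxcolK (fun j => rmap M (vnbr x j) x) i).
exact: rowsub_sub.
Qed.

Lemma surj b (M : rep K n) x : indecomposable b M -> nonzero_rep (sigma b M) ->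
  sinkb b x -> \rank (inmx M x) = rdim M x.
Proof.
move=> [_ Hind] Hnz Hx.
apply/eqP; rewrite eqn_leq rank_leq_col /= leqNgt; apply/negP => Hlt.
have [[y Hyx Hy]|Hall] : (exists2 y, y != x & rdim M y != 0%N) \/
    (forall y, y != x -> rdim M y = 0%N).
  case: (classic (exists2 y, y != x & rdim M y != 0%N)) => H; [by left|right].
  move=> y Hyx; apply/eqP/negPn/negP => H'; apply: H; by exists y.
- apply: Hind.
  pose A := <<inmx M x>>%MS.
  exists (fun y => if y == x then mxresize _ _ A^C%MS else 0),
         (fun y => if y == x then mxresize _ _ A else 1%:M); split.
  + move=> a w Ha; have Hax : a != x.
      by apply/eqP => E; move: Ha; rewrite E; apply/negP/sink_no_out.
    by rewrite (negbTE Hax) mul0mx sub0mx.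
  + move=> a w Ha; have Hax : a != x.
      by apply/eqP => E; move: Ha; rewrite E; apply/negP/sink_no_out.
    rewrite (negbTE Hax) mul1mx.
    have [E|_] := eqVneq w x; last exact: submx1.
    subst w; rewrite mxresize_id.
    have := adj_sym (andP Ha).1 => /adjP [i Ei]; subst a.
    by rewrite genmxE sub_inmx.
  + move=> w; have [E|_] := eqVneq w x.
      subst w; rewrite !mxresize_id capmxC capmx_compl sub0mx /= addsmxC.
      exact: submx_full (addsmx_compl_full A).
    by rewrite cap0mx sub0mx addsmxSr.
  + exists x; rewrite eqxx mxresize_id -mxrank_eq0 mxrank_compl mxrank_gen.
    by rewrite subn_eq0 -ltnNge.
  + by exists y; rewrite (negbTE Hyx); apply: one_neq0.
- case: Hnz => v; apply/negP; rewrite negbK.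
  case Hv: (sinkb b v).
    rewrite -leqn0; apply: leq_trans (rs_le M Hv) _.
    rewrite leqn0 big1 // => i _; apply/eqP; rewrite Hall //.
    apply/eqP => E; have := sinkb_adj b (adj_vnbr v i); rewrite E Hx Hv //.
  rewrite rs_source ?Hv // Hall //; apply/eqP => E; move: Hv; rewrite E Hx //.
Qed.

Lemma noniso b (M : rep K n) x i1 i2 : indecomposable b M -> nonzero_rep (sigma b M) ->
  sinkb b x -> i1 != i2 -> rdim M (vnbr x i1) != 0%N -> rdim M (vnbr x i2) != 0%N ->
  rdim (sigma b M) x != 0%N.
Proof.
move=> Hind Hnz Hx H12 H1 H2; apply: contraT; rewrite negbK => /eqP H0; exfalso.
have Hs := surj Hind Hnz Hx.
rewrite rs_sink // Hs in H0.
have HS : (\sum_(i < n) rdim M (vnbr x i) = rdim M x)%N.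
  apply/eqP; rewrite eqn_leq -subn_eq0 H0 eqxx /= -{1}Hs; exact: rank_leq_row.
pose B i := rmap M (vnbr x i) x.
pose u1 := vnbr x i1.
pose P := descb x u1.
pose U0 := <<B i1>>%MS.
pose W0 := (\sum_(i | i != i1) <<B i>>)%MS.
case: Hind => _; apply.
have Hu1 : u1 != x by apply: vnbr_neq.
have Hpu1 : par x u1 = x by apply: par_vnbr.
have Hedge : forall a y, adj a y -> a != x -> y != x -> rdim M a != 0%N -> rdim M y != 0%N ->
    P a = P y.
  move=> a y Hay Ha Hy _ _; apply: descb_edge => //; rewrite Hpu1.
    by rewrite (negbTE Hy) andbF.
  by rewrite (negbTE Ha) andbF.
exists (fun y => if y == x then mxresize _ _ U0 else if P y then 1%:M else 0),
       (fun y => if y == x then mxresize _ _ W0 else if P y then 0 else 1%:M); split.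
- move=> a y Ha; have Hax : a != x.
    by apply/eqP => E; move: Ha; rewrite E; apply/negP/sink_no_out.
  rewrite (negbTE Hax).
  have [E|Hyx] := eqVneq y x.
    subst y; rewrite mxresize_id.
    have := adj_sym (andP Ha).1 => /adjP [i Ei]; subst a.
    rewrite /P descb_vnbr; have [E|_] := eqVneq i i1; last by rewrite mul0mx sub0mx.
    by subst i; rewrite mul1mx genmxE.
  have [E|E] := boolP ((rdim M a == 0)%N || (rdim M y == 0)%N); first exact: mul_dim0.
  move: E; rewrite negb_or => /andP[Hx' Hy].
  rewrite (Hedge a y (andP Ha).1) //.
  by case: (P y); [rewrite submx1 | rewrite mul0mx sub0mx].
- move=> a y Ha; have Hax : a != x.
    by apply/eqP => E; move: Ha; rewrite E; apply/negP/sink_no_out.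
  rewrite (negbTE Hax).
  have [E|Hyx] := eqVneq y x.
    subst y; rewrite mxresize_id.
    have := adj_sym (andP Ha).1 => /adjP [i Ei]; subst a.
    rewrite /P descb_vnbr; have [E|Hi] := eqVneq i i1; first by rewrite mul0mx sub0mx.
    rewrite mul1mx; apply: (sumsmx_sup i) => //; by rewrite genmxE.
  have [E|E] := boolP ((rdim M a == 0)%N || (rdim M y == 0)%N); first exact: mul_dim0.
  move: E; rewrite negb_or => /andP[Hx' Hy].
  rewrite (Hedge a y (andP Ha).1) //.
  by case: (P y); [rewrite mul0mx sub0mx | rewrite submx1].
- move=> y; have [E|_] := eqVneq y x; last first.
    by case: (P y); [rewrite capmx0 sub0mx addsmxSl | rewrite cap0mx sub0mx addsmxSr].
  subst y; rewrite !mxresize_id.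
  have Hin : (inmx M x <= U0 + W0)%MS.
    rewrite /inmx -[\mxcol_i _]mul1mx.
    rewrite -(submxrowK (1%:M : 'M[K]_(\sum_(i < n) rdim M (vnbr x i)))) mul_mxrow_mxcol.
    apply: summx_sub => j _; apply: submx_trans (submxMl _ _) _.
    have [E|Hj] := eqVneq j i1.
      subst j; apply: submx_trans _ (addsmxSl _ _); by rewrite genmxE.
    apply: submx_trans _ (addsmxSr _ _); apply: (sumsmx_sup j) => //; by rewrite genmxE.
  have Hfull : \rank (U0 + W0)%MS = rdim M x.
    apply/eqP; rewrite eqn_leq rank_leq_col /= -{1}Hs; exact: mxrankS.
  have HU : (\rank U0 <= rdim M (vnbr x i1))%N.
 apply: leq_trans (rank_leq_row (B i1)); apply: eq_leq; exact: mxrank_gen.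
  have HW0 := (mxrank_sum_leqif _).1 : (\rank W0 <= _)%N.
  have HW : (\rank W0 <= \sum_(i | i != i1) rdim M (vnbr x i))%N.
    apply: leq_trans HW0 _; apply: leq_sum => i _; apply: leq_trans (rank_leq_row (B i)); apply: eq_leq; exact: mxrank_gen.
  have Hdir : (U0 :&: W0 <= (0 : 'M[K]_(rdim M x)))%MS.
    have E := (mxrank_adds_leqif U0 W0).2.
    have H : (\rank (U0 + W0)%MS == \rank U0 + \rank W0)%N.
      apply/eqP/anti_leq.
      rewrite (mxrank_adds_leqif U0 W0).1 /= Hfull.
      by apply: leq_trans (eq_leq HS); rewrite (bigD1 i1) //= leq_add.
    rewrite E in H; exact: H.
  by rewrite Hdir /=; apply: submx_full; rewrite /row_full Hfull.
- by exists u1; rewrite (negbTE Hu1) /P descb_refl; apply: one_neq0.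
- have H21 : (i2 == i1) = false by rewrite eq_sym (negbTE H12).
  exists (vnbr x i2); rewrite (negbTE (vnbr_neq x i2)) /P descb_vnbr H21.
  exact: one_neq0.
Qed.

End Reps3.


Section Main.
Variables (K : fieldType) (n : nat) (b : bool) (M : rep K n) (c : V n) (d r : nat).
Hypothesis Hind : indecomposable b M.
Hypothesis Hreg : regular b M.
Hypothesis Hdiam : is_diam M d.
Hypothesis Hsink : sink_module b M.
Variable p : seq (V n).
Hypotheses (Hpsp : supp_path M p) (Hps : size p = d.+1) (Hd2 : d = r.*2)
  (Hpc : nth (vroot n) p r = c).

Local Notation h := (ht c).
Local Notation pc := (par c).
Local Notation S v := (rdim M v != 0%N).
Local Notation Sg v := (rdim (sigma b M) v != 0%N).
Local Notation vr := (vroot n).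
Local Notation fp := (nth (vroot n) p).

Lemma Hnz : nonzero_rep (sigma b M).
Proof. exact: (Hreg 1).1. Qed.

Lemma fp_path : fpth fp d.
Proof. by have := tpath_fpath (andP Hpsp).1; rewrite Hps. Qed.

Lemma fp_S i : (i <= d)%N -> S (fp i).
Proof.
move=> Hi; have /allP := (andP Hpsp).2; apply; apply: mem_nth; rewrite Hps; lia.
Qed.

Lemma fp_diam : diam_path M p.
Proof. by split => // q /(proj2 Hdiam); rewrite Hps. Qed.

Lemma fp_sink : sinkb b (fp 0).
Proof. by have /andP[] := Hsink fp_diam. Qed.

Lemma vfacts f L : fpth f L -> exists k, [/\ (k <= L)%N,
  (forall i, (i <= k)%N -> h (f i) + i = h (f 0))%N,
  (forall i, (k <= i <= L)%N -> h (f i) = h (f k) + (i - k))%N,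
  (forall i, (i <= k)%N -> f i = iter i pc (f 0)) &
  (forall j, (j <= L - k)%N -> f (L - j)%N = iter j pc (f L))].
Proof.
move=> Hf; have [k [HkL Hd Hu]] := valley c Hf.
have [H1 H2] := valley_ht HkL Hd Hu.
exists k; split => //.
  elim=> [|i IH] Hi //=; rewrite -IH; last lia.
  by case: (Hd i Hi).
elim=> [|j IH] Hj; first by rewrite subn0.
rewrite /= -IH; last lia.
have [_ E] := Hu (L - j.+1)%N ltac:(lia).
by rewrite E; congr (pc (f _)); lia.
Qed.

Lemma fp_h i : (i <= d)%N -> (if (i <= r)%N then h (fp i) + i = r else h (fp i) + r = i)%N.
Proof.
have [k [HkL E1 E2 _ _]] := vfacts fp_path.
have Hr0 : h (fp r) = 0%N by apply/eqP; rewrite ht0 Hpc.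
have Hk : k = r.
  case: (ltngtP k r) => // H.
  - by have := E2 r ltac:(lia); rewrite Hr0; lia.
  - by have := E1 r ltac:(lia); have := E1 k (leqnn k); rewrite Hr0; lia.
subst k => Hi; case: ifP => H.
  by rewrite E1 // -(E1 r (leqnn r)) Hr0.
by rewrite E2; lia.
Qed.

Lemma sink_par_gen m v : h v = m -> sinkb b v = odd m (+) sinkb b c.
Proof.
elim: m v => [|m IH] v Hv.
  by move/eqP: Hv; rewrite ht0 => /eqP ->.
have Hvc : v != c by rewrite -ht0 Hv.
have E : sinkb b v = ~~ sinkb b (pc v) by rewrite (sinkb_adj b (adj_par Hvc)) negbK.
rewrite E (IH (pc v)); last by rewrite ht_par Hv.
by rewrite /= addNb.
Qed.

Lemma sink_par v : sinkb b v = (odd (h v) == odd r).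
Proof.
have H0 : h (fp 0) = r by move: (fp_h (leq0n d)); rewrite leq0n; lia.
have Hc : sinkb b c = ~~ odd r.
  by have := sink_par_gen H0; rewrite fp_sink; case: (odd r); case: (sinkb b c).
by rewrite (sink_par_gen (erefl (h v))) Hc; case: (odd (h v)); case: (odd r).
Qed.

Lemma S_c : S c.
Proof. by rewrite -Hpc; apply: fp_S; lia. Qed.

Lemma S_par v : S v -> S (pc v).
Proof.
move=> Hv; have [->|Hvc] := eqVneq v c; first by rewrite par_root S_c.
exact: supp_par Hind S_c Hv Hvc.
Qed.

Lemma S_iter k v : S v -> S (iter k pc v).
Proof. by move=> Hv; elim: k => //= k IH; apply: S_par. Qed.

Lemma neq_h x y : h x != h y -> x != y.
Proof. by apply: contra => /eqP ->. Qed.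

Lemma adj_down x y : adj x y -> (h y).+1 = h x -> y = pc x.
Proof. by case/(adj_ht c) => [[_ [E _]] //|[_ [_ E]]] H; lia. Qed.

Lemma chain_fpth v m : h v = m -> fpth (fun i => iter i pc v) m.
Proof.
move=> Hv; split => i Hi.
  rewrite /=; apply: adj_par; rewrite -ht0 iter_par_ht; lia.
apply: neq_h; rewrite !iter_par_ht; lia.
Qed.

Lemma supp_mkseq (N : rep K n) f L : fpth f L -> (forall i, (i <= L)%N -> rdim N (f i) != 0%N) ->
  supp_path N (mkseq f L.+1).
Proof.
move=> Hf HS; apply/andP; split; first exact: fpth_tpath.
apply/allP => x /mapP [i Hi ->]; rewrite mem_iota in Hi; apply: HS; lia.
Qed.

Lemma half_choice a : exists q : nat -> V n, [/\ fpth q d, (forall i, (i <= d)%N -> S (q i)),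
  q r = c, ((0 < r)%N -> q r.-1 != a) & (forall i, (i <= r)%N -> h (q i) + i = r)%N].
Proof.
have Hh1 : forall i, (i <= r)%N -> (h (fp i) + i = r)%N.
  move=> i Hi; have H := @fp_h i ltac:(lia); rewrite Hi in H; exact H.
have Hh2 : forall i, (i <= r)%N -> (h (fp (d - i)) + i = r)%N.
  move=> i Hi; have := @fp_h (d - i)%N ltac:(lia); case: ifP => _; lia.
have [Hr0|Hr0] := posnP r.
  by exists fp; split; [exact: fp_path|exact: fp_S|exact: Hpc|by rewrite Hr0|exact: Hh1].
have Hne : fp r.-1 != fp r.+1.
  by have := (proj2 fp_path) r.-1 ltac:(lia); have -> : r.-1.+2 = r.+1 by lia.
case: (eqVneq (fp r.-1) a) => Ha.
  exists (fun i => fp (d - i)); split.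
  - exact: fpth_rev fp_path.
  - by move=> i Hi; apply: fp_S; lia.
  - by rewrite -Hpc; congr fp; lia.
  - move=> _; have E : (d - r.-1 = r.+1)%N by lia.
    by rewrite E -Ha eq_sym.
  - exact: Hh2.
by exists fp; split; [exact: fp_path|exact: fp_S|exact: Hpc|move=> _; exact: Ha|exact: Hh1].
Qed.

Lemma S_ht v : S v -> (h v <= r)%N.
Proof.
move=> Hv; set m := h v; case: (leqP m r) => // Hmr; exfalso.
have [q [Hq HqS Hqr Hqa _]] := half_choice (iter m.-1 pc v).
pose f i := if (i <= r)%N then q i else iter (m - (i - r)) pc v.
have Hfh : forall j, (r <= j <= r + m)%N -> h (f j) = (j - r)%N.
  move=> j Hj; rewrite /f; case: ifP => H.
    have -> : j = r by lia. by rewrite Hqr subnn; apply/eqP; rewrite ht0.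
  rewrite iter_par_ht -/m; lia.
have Hfup : forall j, (r <= j < r + m)%N -> f j = pc (f j.+1).
  move=> j Hj; rewrite /f; have -> : (j.+1 <= r)%N = false by lia.
  have E : (m - (j.+1 - r)).+1 = (m - (j - r))%N by lia.
  rewrite -iterS E; case: ifP => H //.
  have -> : j = r by lia. by rewrite Hqr subnn subn0 /m iter_par_root.
have Hf : fpth f (r + m).
  split => i Hi.
    case: (ltnP i r) => H.
      rewrite /f; have -> : (i <= r)%N = true by lia.
      have -> : (i.+1 <= r)%N = true by lia.
      apply: (proj1 Hq); lia.
    rewrite (Hfup i); last lia; apply: adj_sym; apply: adj_par.
    by rewrite -ht0 Hfh; lia.
  case: (ltnP i.+1 r) => H.
    rewrite /f; have -> : (i <= r)%N = true by lia.
    have -> : (i.+2 <= r)%N = true by lia.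
    apply: (proj2 Hq); lia.
  case: (eqVneq i.+1 r) => H'.
    rewrite /f; have -> : (i <= r)%N = true by lia.
    have -> : (i.+2 <= r)%N = false by lia.
    have -> : (m - (i.+2 - r) = m.-1)%N by lia.
    have -> : i = r.-1 by lia.
    by apply: Hqa; lia.
  by apply: neq_h; rewrite !Hfh; lia.
have Hsp : supp_path M (mkseq f (r + m).+1).
  apply: supp_mkseq => // i Hi; rewrite /f; case: ifP => H.
    apply: HqS; lia.
  exact: S_iter.
have := (proj2 Hdiam) _ Hsp; rewrite size_mkseq; lia.
Qed.

Local Notation rs v := (rdim (sigma b M) v).

Lemma notS v : (r < h v)%N -> rdim M v = 0%N.
Proof. by move=> H; apply/eqP; apply: contraTT H => /S_ht; rewrite -leqNgt. Qed.

Lemma Sg_src v : Sg v -> ~~ sinkb b v -> S v.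
Proof. by move=> H Hs; rewrite -(rs_source M Hs). Qed.

Lemma Qsrc v : S v -> ~~ sinkb b v -> Sg v.
Proof. by move=> H Hs; rewrite (rs_source M Hs). Qed.

Lemma rs_snk v : sinkb b v -> rs v = (\sum_(i < n) rdim M (vnbr v i) - rdim M v)%N.
Proof. by move=> H; rewrite rs_sink // (surj Hind Hnz H). Qed.

Lemma nbr_le v u : adj v u -> (rdim M u <= \sum_(i < n) rdim M (vnbr v i))%N.
Proof. by case/adjP => i <-; rewrite (bigD1 i) //= leq_addr. Qed.

Lemma Q1 v : (r < h v)%N -> rs v = 0%N.
Proof.
move=> H; case Hs: (sinkb b v); last by rewrite rs_source ?Hs // notS.
have H2 : (r.+1 < h v)%N.
  rewrite ltn_neqAle H andbT; apply/eqP => E; move: Hs.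
  by rewrite sink_par -E /=; case: (odd r).
apply/eqP; rewrite -leqn0; apply: leq_trans (rs_le M Hs) _.
rewrite leqn0; apply/eqP; apply: big1 => i _; apply: notS.
have := adj_ht c (adj_vnbr v i); lia.
Qed.

Lemma Sg_ht v : Sg v -> (h v <= r)%N.
Proof. by move=> H; rewrite leqNgt; apply: contra H => /Q1 ->. Qed.

Lemma r_pos : (0 < r)%N.
Proof.
rewrite lt0n; apply/eqP => Hr0; case: Hnz => v; apply/negP; rewrite negbK.
have [Hvc|Hvc] := eqVneq v c; last by apply/eqP; apply: Q1; rewrite Hr0 lt0n ht0.
subst v; have Hs : sinkb b c by rewrite sink_par Hr0 (_ : h c = 0%N) //; apply/eqP; rewrite ht0.
rewrite -leqn0; apply: leq_trans (rs_le M Hs) _.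
rewrite leqn0; apply/eqP; apply: big1 => i _; apply: notS.
have Hc0 : h c = 0%N by apply/eqP; rewrite ht0.
have := adj_ht c (adj_vnbr c i); rewrite Hr0; lia.
Qed.

Lemma nbr_sum_leaf v : h v = r -> (\sum_(i < n) rdim M (vnbr v i) = rdim M (pc v))%N.
Proof.
move=> Hv; have Hvc : v != c by rewrite -ht0 Hv -lt0n r_pos.
have /adjP [i0 Ei0] := adj_par Hvc.
rewrite (bigD1 i0) //= Ei0 big1 ?addn0 // => i Hi.
have Hne : vnbr v i != pc v.
  by rewrite -Ei0; apply/eqP => /vnbr_inj E; move: Hi; rewrite E eqxx.
apply: notS; case: (adj_ht c (adj_vnbr v i)) => [[_ [E _]]|[_ [_ E]]]; last lia.
by move: Hne; rewrite E eqxx.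
Qed.

Lemma Qout v u : sinkb b v -> ~~ S v -> adj v u -> S u -> Sg v.
Proof.
move=> Hs Hv Hu HSu; rewrite rs_snk // (eqP (negbNE Hv)) subn0.
by rewrite -lt0n; apply: leq_trans (nbr_le Hu); rewrite lt0n.
Qed.

Lemma QN v u1 u2 : sinkb b v -> adj v u1 -> adj v u2 -> u1 != u2 -> S u1 -> S u2 -> Sg v.
Proof.
move=> Hs /adjP[i1 <-] /adjP[i2 <-] Hne H1 H2.
apply: (noniso Hind Hnz Hs _ H1 H2).
by apply: contra Hne => /eqP ->.
Qed.

Lemma sigma_path f L : fpth f L -> (forall i, (0 < i < L)%N -> S (f i)) ->
  Sg (f 0%N) -> Sg (f L) -> forall i, (i <= L)%N -> Sg (f i).
Proof.
move=> [Hadj Hnb] HS H0 HL i Hi.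
case: (posnP i) => [->|Hi0] //; case: (eqVneq i L) => [->|HiL] //.
have HiS : S (f i) by apply: HS; lia.
case Hsk: (sinkb b (f i)); last by apply: Qsrc; rewrite ?Hsk.
have A1 : adj (f i) (f i.-1).
  by apply: adj_sym; have := Hadj i.-1 ltac:(lia); rewrite prednK.
have A2 : adj (f i) (f i.+1) by apply: Hadj; lia.
have S1 : S (f i.-1).
  case: (posnP i.-1) => E1; last by apply: HS; lia.
  by rewrite E1; apply: Sg_src H0 _; rewrite -E1 (sinkb_adj b A1) Hsk.
have S2 : S (f i.+1).
  case: (eqVneq i.+1 L) => E2; last by apply: HS; lia.
  by rewrite E2; apply: Sg_src HL _; rewrite -E2 (sinkb_adj b A2) Hsk.
apply: (QN Hsk A1 A2) => //.
by have := Hnb i.-1 ltac:(lia); rewrite prednK.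
Qed.

Lemma Zsink z : h z = r -> sinkb b z.
Proof. by move=> H; rewrite sink_par H eqxx. Qed.

Lemma src_rm1 v : h v = r.-1 -> ~~ sinkb b v.
Proof.
have := r_pos; move=> Hr0 H; rewrite sink_par H.
by case: r Hr0 {H} => // r' _ /=; case: (odd r').
Qed.

Lemma Z_par z : h z = r -> Sg z -> S (pc z).
Proof.
move=> Hz Hs; rewrite -lt0n; apply: leq_trans (_ : 0 < rs z)%N _; first by rewrite lt0n.
by rewrite -(nbr_sum_leaf Hz); apply: rs_le; apply: Zsink.
Qed.

Lemma Z_chainS z i : h z = r -> Sg z -> (0 < i)%N -> S (iter i pc z).
Proof.
move=> Hz Hs Hi; case: i Hi => // i _; rewrite iterSr; apply: S_iter; exact: Z_par.
Qed.

Lemma vfacts0 f L j : fpth f L -> (j <= L)%N -> f j = c ->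
  [/\ (forall i, (i <= j)%N -> h (f i) + i = j)%N,
      (forall i, (j <= i <= L)%N -> h (f i) + j = i)%N,
      (forall i, (i <= j)%N -> f i = iter i pc (f 0)) &
      (forall i, (i <= L - j)%N -> f (L - i)%N = iter i pc (f L))].
Proof.
move=> Hf HjL Hfj; have [k [HkL E1 E2 E3 E4]] := vfacts Hf.
have Hr0 : h (f j) = 0%N by apply/eqP; rewrite ht0 Hfj.
have Hk : k = j.
  case: (ltngtP k j) => // H.
  - by have := E2 j ltac:(lia); rewrite Hr0; lia.
  - by have := E1 j ltac:(lia); have := E1 k (leqnn k); rewrite Hr0; lia.
subst k; split => //.
  by move=> i Hi; rewrite (E1 i Hi) -(E1 j (leqnn j)) Hr0.
by move=> i Hi; rewrite E2 // Hr0; lia.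
Qed.

Lemma chain_iter f m : fpth f m -> (forall i, (i <= m)%N -> h (f i) + i = h (f 0))%N ->
  forall i, (i <= m)%N -> f i = iter i pc (f 0).
Proof.
move=> [Ha _] Hh; elim=> [|i IH] Hi //=.
rewrite -IH; last lia.
apply: adj_down; first by apply: Ha; lia.
have := Hh i ltac:(lia); have := Hh i.+1 Hi; lia.
Qed.

Lemma sp_nz (N : rep K n) q i : supp_path N q -> (i <= (size q).-1)%N -> rdim N (nth vr q i) != 0%N.
Proof.
case/andP => Ht /allP Ha Hi; apply: Ha; apply: mem_nth.
case: q Ht Hi => //= a q _; lia.
Qed.

Lemma sp_fpth (N : rep K n) q : supp_path N q -> fpth (nth vr q) (size q).-1.
Proof. by case/andP => Ht _; apply: tpath_fpath. Qed.

Lemma sfacts q : supp_path (sigma b M) q -> exists k, [/\ (k <= (size q).-1)%N,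
  ((size q).-1 + 2 * h (nth vr q k) = h (nth vr q 0) + h (nth vr q (size q).-1))%N,
  (h (nth vr q k) + k = h (nth vr q 0))%N,
  (forall i, (i <= k)%N -> nth vr q i = iter i pc (nth vr q 0)) &
  (forall i, (i <= (size q).-1 - k)%N -> nth vr q ((size q).-1 - i)%N = iter i pc (nth vr q (size q).-1))].
Proof.
move=> Hq; have [k [HkL E1 E2 E3 E4]] := vfacts (sp_fpth Hq).
exists k; split => //.
  have := E1 k (leqnn k); have := E2 (size q).-1 ltac:(lia); lia.
exact: E1.
Qed.

Lemma sp_len q : supp_path (sigma b M) q -> ((size q).-1 <= h (nth vr q 0) + h (nth vr q (size q).-1))%N.
Proof. by move=> Hq; have [k [_ E _ _ _]] := sfacts Hq; lia. Qed.

Lemma sp_hle q i : supp_path (sigma b M) q -> (i <= (size q).-1)%N -> (h (nth vr q i) <= r)%N.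
Proof. by move=> Hq Hi; apply: Sg_ht; apply: sp_nz. Qed.

Lemma twochain_h u w m1 m2 i : h u = m1 -> h w = m2 -> (i <= m1 + m2)%N ->
  h (if (i <= m1)%N then iter i pc u else iter (m1 + m2 - i) pc w) =
  (if (i <= m1)%N then m1 - i else i - m1)%N.
Proof. by move=> Hu Hw Hi; case: ifP => H; rewrite iter_par_ht; lia. Qed.

Lemma twochain u w m1 m2 : h u = m1 -> h w = m2 ->
  ((0 < m1)%N -> (0 < m2)%N -> iter m1.-1 pc u != iter m2.-1 pc w) ->
  fpth (fun i => if (i <= m1)%N then iter i pc u else iter (m1 + m2 - i) pc w) (m1 + m2).
Proof.
move=> Hu Hw Hne.
set f := fun i => _.
have Hh : forall i, (i <= m1 + m2)%N -> h (f i) = (if (i <= m1)%N then m1 - i else i - m1)%N.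
  by move=> i Hi; rewrite /f twochain_h.
split => i Hi.
  case: (ltnP i m1) => H.
    rewrite /f; have -> : (i <= m1)%N = true by lia.
    have -> : (i.+1 <= m1)%N = true by lia.
    by apply: (proj1 (chain_fpth Hu)).
  have Hc : f i.+1 != c.
    by rewrite -ht0 Hh; try lia; case: ifP; lia.
  have -> : f i = pc (f i.+1).
    rewrite /f; have -> : (i.+1 <= m1)%N = false by lia.
    have E : (m1 + m2 - i.+1).+1 = (m1 + m2 - i)%N by lia.
    rewrite -iterS E; case: ifP => H' //.
    have -> : i = m1 by lia.
    have E1 : iter m1 pc u = c by rewrite -Hu iter_par_root.
    have E2 : (m1 + m2 - m1 = h w)%N by lia.
    by rewrite E1 E2 iter_par_root.
  by apply: adj_sym; apply: adj_par.
case: (eqVneq i.+1 m1) => H.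
  rewrite /f; have -> : (i <= m1)%N = true by lia.
  have -> : (i.+2 <= m1)%N = false by lia.
  have -> : i = m1.-1 by lia.
  have -> : (m1 + m2 - m1.-1.+2 = m2.-1)%N by lia.
  by apply: Hne; lia.
apply: neq_h; rewrite !Hh; try lia.
by case: ifP; case: ifP; lia.
Qed.

Lemma is_diam_uniq (N : rep K n) e e' : is_diam N e -> is_diam N e' -> e = e'.
Proof.
move=> [[q [Hq Hs]] H] [[q' [Hq' Hs']] H'].
have := H _ Hq'; have := H' _ Hq; lia.
Qed.

Lemma diam_size (N : rep K n) e q : is_diam N e -> diam_path N q -> size q = e.+1.
Proof.
move=> [[q0 [Hq0 Hs0]] H] [Hq Hmax].
have := H _ Hq; have := Hmax _ Hq0; lia.
Qed.

Lemma diam_of (N : rep K n) e q : is_diam N e -> supp_path N q -> size q = e.+1 -> diam_path N q.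
Proof. by move=> [_ H] Hq Hs; split => // q' /H; rewrite Hs. Qed.

Definition concl (d' : nat) : Prop :=
    [/\ is_diam (sigma b M) d',
        (d <= d' + 2)%N /\ (d' <= d)%N,
        [/\ (d' + 2 = d)%N <-> sink_module (~~ b) (sigma b M),
            sink_module (~~ b) (sigma b M) <-> complete M c r &
            (d' + 2 = d)%N -> vcenter (sigma b M) c],
        ((d' + 1 = d)%N <-> flow_module (sigma b M)) /\
        ((d' + 1 = d)%N ->
           exists c' : V n,
             ecenter (sigma b M) c c' /\
             exists p : seq (V n),
               [/\ tpath p, size p = r.+1, nth (vroot n) p 0 = c,
                   nth (vroot n) p 1 = c' & ~~ sinkb (~~ b) (nth (vroot n) p r)]) &
        ((d' = d)%N <-> source_module (~~ b) (sigma b M)) /\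
        ((d' = d)%N -> vcenter (sigma b M) c)].

Lemma flow_iff e : is_diam (sigma b M) e -> (flow_module (sigma b M) <-> odd e).
Proof.
move=> He; split; first by case=> e' [He' Ho]; rewrite (is_diam_uniq He He').
by move=> Ho; exists e.
Qed.

Lemma complete_iff : complete M c r <-> (forall z, h z = r -> ~~ Sg z).
Proof.
split.
  move=> [_ Hc] z Hz; apply/negP => Hs.
  pose f i := iter i pc z.
  have Hf := chain_fpth Hz.
  have Hcz : iter r pc z = c by rewrite -Hz iter_par_root.
  have := Hc (mkseq f r.+1) (fpth_tpath Hf) (size_mkseq _ _).
  rewrite !nth_mkseq //; last by have := r_pos; lia.
  move=> /(_ Hcz) E.
  have {E} E : rdim M z = rdim M (pc z).
    apply: E => i /andP[Hi1 Hi2]; rewrite nth_mkseq; last lia.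
    by apply: Z_chainS.
  move: Hs; rewrite rs_snk ?Zsink // nbr_sum_leaf // -E subnn //.
move=> HA; split; first exact: r_pos.
move=> q Ht Hs Hqr _.
have Hf : fpth (nth vr q) r by have := tpath_fpath Ht; rewrite Hs.
have [E1 _ E3 _] := vfacts0 Hf (leqnn r) Hqr.
have H0 : h (nth vr q 0) = r by have := E1 0%N (leq0n _); rewrite addn0.
have H1 : nth vr q 1 = pc (nth vr q 0) by rewrite (E3 1%N) //; exact: r_pos.
have Hsk := Zsink H0.
have Hr0 := HA _ H0; rewrite rs_snk // nbr_sum_leaf // subn_eq0 negbK in Hr0.
rewrite H1; apply/eqP; rewrite eqn_leq Hr0 andbT.
rewrite -{1}(surj Hind Hnz Hsk) -(nbr_sum_leaf H0); exact: rank_leq_row.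
Qed.

Lemma fp_hr1 : h (fp 1) = r.-1 /\ h (fp d.-1) = r.-1.
Proof.
have Hr1 := r_pos.
split.
  by have := @fp_h 1%N ltac:(lia); rewrite (_ : (1 <= r)%N = true); [lia|lia].
have := @fp_h d.-1 ltac:(lia); case: ifP => _; lia.
Qed.

Lemma caseA : (forall z, h z = r -> ~~ Sg z) -> concl (d - 2).
Proof.
move=> HA; have Hr1 := r_pos.
set LA := (d - 2)%N.
have HLA : LA = (r.-1).*2 by rewrite /LA Hd2; lia.
clearbody LA.
have Hb : forall v, Sg v -> (h v <= r.-1)%N.
  move=> v Hv; have := Sg_ht Hv; case: (eqVneq (h v) r) => E; last lia.
  by move: (HA v E); rewrite Hv.
pose fA i := fp i.+1.
have HfA : fpth fA LA.
  split => i Hi; [apply: (proj1 fp_path) | apply: (proj2 fp_path)]; lia.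
have [H1 Hd1] := fp_hr1.
have HpA : supp_path (sigma b M) (mkseq fA LA.+1).
  apply: supp_mkseq => //; apply: sigma_path => //.
  - by move=> i Hi; apply: fp_S; lia.
  - by apply: Qsrc; [apply: fp_S; lia | apply: src_rm1].
  - rewrite /fA (_ : LA.+1 = d.-1); last lia.
    by apply: Qsrc; [apply: fp_S; lia | apply: src_rm1].
have HdA : is_diam (sigma b M) LA.
  split; first by exists (mkseq fA LA.+1); rewrite size_mkseq.
  move=> q Hq; have := sp_len Hq.
  have := Hb _ (sp_nz Hq (leq0n _)); have := Hb _ (sp_nz Hq (leqnn _)).
  case: q Hq => //= a q _; lia.
have Hdp : forall q, diam_path (sigma b M) q ->
    [/\ (size q).-1 = LA, h (nth vr q 0) = r.-1, h (nth vr q LA) = r.-1 & nth vr q r.-1 = c].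
  move=> q Hq; have Hs := diam_size HdA Hq.
  have [k [Hk E1 E2 _ _]] := sfacts (proj1 Hq).
  have := Hb _ (sp_nz (proj1 Hq) (leq0n _)); have := Hb _ (sp_nz (proj1 Hq) (leqnn _)).
  rewrite Hs /= => B1 B2; rewrite Hs /= in E1 Hk.
  have Hk0 : h (nth vr q k) = 0%N by lia.
  have Hkr : k = r.-1 by lia.
  split => //; try lia.
  by apply/eqP; rewrite -ht0 -Hkr Hk0.
have HsinkA : sink_module (~~ b) (sigma b M).
  move=> q Hq; have [E0 Ea Eb _] := Hdp q Hq.
  by rewrite /pfirst /plast E0 !sinkb_neg !src_rm1.
split => //.
- split; lia.
- split.
  + by split => _ //; lia.
  + by split => _ //; apply/complete_iff.
  + move=> _ q Hq; have [E0 _ _ Ec] := Hdp q Hq.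
    rewrite E0 (_ : LA = (r.-1).*2); last lia.
    by rewrite odd_double half_double.
- split; last by move=> H; exfalso; lia.
  rewrite (flow_iff HdA); split => H; first lia.
  by move: H; rewrite (_ : LA = (r.-1).*2) ?odd_double //; lia.
- split; last by move=> H; exfalso; lia.
  split => H; first lia.
  have Hdp' : diam_path (sigma b M) (mkseq fA LA.+1) by apply: (diam_of HdA HpA); rewrite size_mkseq.
  have /andP[Hf _] := H _ Hdp'; exfalso; move: Hf.
  by rewrite /pfirst nth_mkseq // sinkb_neg negbK /fA (negbTE (src_rm1 H1)).
Qed.

Lemma diam_center e q : is_diam (sigma b M) e -> diam_path (sigma b M) q -> e = r.*2 ->
  [/\ size q = e.+1, h (nth vr q 0) = r, h (nth vr q e) = r & nth vr q r = c].
Proof.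
move=> He Hq Ee; have Hs := diam_size He Hq.
have [k [Hk E1 E2 _ _]] := sfacts (proj1 Hq).
have := sp_hle (proj1 Hq) (leq0n _); have := sp_hle (proj1 Hq) (leqnn _).
rewrite Hs /= => B1 B2; rewrite Hs /= in E1 Hk.
have Hk0 : h (nth vr q k) = 0%N by lia.
have Hkr : k = r by lia.
split => //; try lia.
by apply/eqP; rewrite -ht0 -Hkr Hk0.
Qed.

Lemma caseB1 z0 z1 : h z0 = r -> Sg z0 -> h z1 = r -> Sg z1 ->
  iter r.-1 pc z0 != iter r.-1 pc z1 -> concl d.
Proof.
move=> Hz0 Hs0 Hz1 Hs1 Hne; have Hr1 := r_pos.
pose f i := if (i <= r)%N then iter i pc z0 else iter (r + r - i) pc z1.
have Hf : fpth f (r + r) by apply: twochain => // _ _.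
have Hd : (r + r = d)%N by rewrite Hd2; lia.
rewrite Hd in Hf.
have Hp : supp_path (sigma b M) (mkseq f d.+1).
  apply: supp_mkseq => //; apply: sigma_path => //.
  - move=> i Hi; rewrite /f; case: ifP => H; apply: Z_chainS => //; lia.
  - have E1 : (d <= r)%N = false by lia.
    have E2 : (r + r - d = 0)%N by lia.
    by rewrite /f E1 E2.
have HdB : is_diam (sigma b M) d.
  split; first by exists (mkseq f d.+1); rewrite size_mkseq.
  move=> q Hq; have := sp_len Hq.
  have := sp_hle Hq (leq0n _); have := sp_hle Hq (leqnn _).
  case: q Hq => //= a q _; lia.
have Hdf : diam_path (sigma b M) (mkseq f d.+1) by apply: (diam_of HdB Hp); rewrite size_mkseq.
have Hnsink : ~ sink_module (~~ b) (sigma b M).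
  move=> H; have /andP[Hf0 _] := H _ Hdf; move: Hf0.
  by rewrite /pfirst nth_mkseq // sinkb_neg /f /= Zsink.
have Hncomp : ~ complete M c r by move/complete_iff => /(_ _ Hz0); rewrite Hs0.
split => //.
- split; lia.
- split.
  + by split => // H; lia.
  + by split.
  + by move=> H; lia.
- split; last by move=> H; lia.
  rewrite (flow_iff HdB) Hd2 odd_double; split => //; lia.
- split.
    split => // _ q Hq; have [_ E0 EL _] := diam_center HdB Hq Hd2.
    by rewrite /pfirst /plast !sinkb_neg !negbK (diam_size HdB Hq) /= !Zsink.
  move=> _ q Hq; have [Es _ _ Ec] := diam_center HdB Hq Hd2.
  by rewrite Es /= Hd2 odd_double half_double.
Qed.

Lemma caseB2 z0 : h z0 = r -> Sg z0 ->
  (forall z, h z = r -> Sg z -> iter r.-1 pc z = iter r.-1 pc z0) -> concl d.-1.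
Proof.
move=> Hz0 Hs0 HB; have Hr1 := r_pos.
set c' := iter r.-1 pc z0.
have [q [Hq HqS Hqr Hqa Hqh]] := half_choice c'.
have Hqc : forall i, (i <= r)%N -> q i = iter i pc (q 0).
  apply: chain_iter; first by apply: fpth_mon Hq; lia.
  by move=> i Hi; rewrite Hqh // -(Hqh 0%N) // addn0.
pose w := q 1.
have Hw : h w = r.-1 by rewrite /w; have := Hqh 1%N Hr1; lia.
have HwS : S w by apply: HqS; lia.
pose f i := if (i <= r)%N then iter i pc z0 else iter (r + r.-1 - i) pc w.
have Hf : fpth f (r + r.-1).
  apply: twochain => // _ H2.
  have -> : iter (r.-1).-1 pc w = q r.-1.
    have E : q r.-1 = iter r.-1 pc (q 0) by apply: Hqc; lia.
    rewrite E /w (Hqc 1%N) // -iterSr.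
    by have -> : (r.-1).-1.+1 = r.-1 by lia.
  by rewrite eq_sym; apply: Hqa.
have Hd : (r + r.-1 = d.-1)%N by rewrite Hd2; lia.
rewrite Hd in Hf.
have HfL : f d.-1 = w.
  rewrite /f; case: ifP => H.
    have Er : r = 1%N by lia.
    have -> : d.-1 = h z0 by lia.
    rewrite iter_par_root; apply/eqP; rewrite eq_sym -ht0 Hw Er //.
  by rewrite (_ : (r + r.-1 - d.-1 = 0)%N) //; lia.
have Hp : supp_path (sigma b M) (mkseq f d.-1.+1).
  apply: supp_mkseq => //; apply: sigma_path => //.
  - move=> i Hi; rewrite /f; case: ifP => H.
      by apply: Z_chainS => //; lia.
    exact: S_iter.
  - by rewrite HfL; apply: Qsrc => //; apply: src_rm1.
have Hbd : forall q', supp_path (sigma b M) q' -> ((size q').-1 <= d.-1)%N.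
  move=> q' Hq'; have := sp_len Hq'.
  have := sp_hle Hq' (leq0n _); have := sp_hle Hq' (leqnn _).
  move=> B1 B2 B3.
  case: (eqVneq (size q').-1 d) => E; last lia.
  exfalso.
  have [k [Hk E1 E2 E3 E4]] := sfacts Hq'.
  rewrite E in E1 E4 Hk B1.
  have Hk0 : h (nth vr q' k) = 0%N by lia.
  have H0r : h (nth vr q' 0) = r by lia.
  have HLr : h (nth vr q' d) = r by lia.
  have Hkr : k = r by lia.
  have X1 : nth vr q' r.-1 = c'.
    rewrite E3; last lia.
    by apply: HB => //; apply: sp_nz.
  have X2 : nth vr q' r.+1 = c'.
    rewrite (_ : r.+1 = d - r.-1)%N; last lia.
    rewrite E4; last lia.
    by apply: HB => //; rewrite -E; apply: sp_nz.
  have := (proj2 (sp_fpth Hq')) r.-1 ltac:(lia).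
  by rewrite (_ : r.-1.+2 = r.+1); [rewrite X1 X2 eqxx | lia].
have HdB : is_diam (sigma b M) d.-1.
  split; first by exists (mkseq f d.-1.+1); rewrite size_mkseq.
  by move=> q' Hq'; have := Hbd q' Hq'; case: q' Hq' => //= a q' _; lia.
have Hdf : diam_path (sigma b M) (mkseq f d.-1.+1) by apply: (diam_of HdB Hp); rewrite size_mkseq.
have Hnsink : ~ sink_module (~~ b) (sigma b M).
  move=> H; have /andP[Hf0 _] := H _ Hdf; move: Hf0.
  by rewrite /pfirst nth_mkseq // sinkb_neg /f /= Zsink.
have Hnsrc : ~ source_module (~~ b) (sigma b M).
  move=> H; have /andP[_ HfL'] := H _ Hdf; move: HfL'.
  by rewrite /plast size_mkseq nth_mkseq //= HfL sinkb_neg negbK (negbTE (src_rm1 Hw)).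
have Hncomp : ~ complete M c r by move/complete_iff => /(_ _ Hz0); rewrite Hs0.
split => //.
- split; lia.
- split.
  + by split => // H; lia.
  + by split.
  + by move=> H; lia.
- split.
    rewrite (flow_iff HdB) Hd2; split => _; last lia.
    by rewrite (_ : (r.*2).-1 = (r.-1).*2.+1); [rewrite /= odd_double | lia].
  move=> _; exists c'; split.
    move=> q' Hq'; have Hs := diam_size HdB Hq'.
    have [k [Hk E1 E2 E3 E4]] := sfacts (proj1 Hq').
    have := sp_hle (proj1 Hq') (leq0n _); have := sp_hle (proj1 Hq') (leqnn _).
    rewrite Hs /= => B1 B2; rewrite Hs /= in E1 E2 E4 Hk.
    have Hk0 : h (nth vr q' k) = 0%N by lia.
    have Hkc : nth vr q' k = c by apply/eqP; rewrite -ht0 Hk0.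
    rewrite (_ : d.-1 = (r.-1).*2.+1); last lia.
    rewrite /= odd_double uphalf_double; split => //.
    have [H0|H0] : h (nth vr q' 0) = r \/ h (nth vr q' 0) = r.-1 by lia.
    - right; have Hkr : k = r by lia.
      split; last first.
        have E : r.-1.+1 = r by lia.
        by rewrite E -Hkr.
      rewrite E3; last lia.
      by apply: HB => //; apply: (sp_nz (proj1 Hq')).
    - left; have Hkr : k = r.-1 by lia.
      split; first by rewrite -Hkr.
      have HL : h (nth vr q' d.-1) = r by lia.
      rewrite (_ : r.-1.+1 = d.-1 - r.-1)%N; last lia.
      rewrite E4; last lia.
      by apply: HB => //; apply: (sp_nz (proj1 Hq')); rewrite Hs.
  exists (mkseq (fun i => iter (r - i) pc z0) r.+1); split.
  + apply: fpth_tpath; exact: (fpth_rev (chain_fpth Hz0)).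
  + by rewrite size_mkseq.
  + by rewrite nth_mkseq // subn0 -{1}Hz0 iter_par_root.
  + by rewrite nth_mkseq // subn1.
  + by rewrite nth_mkseq // subnn /= sinkb_neg negbK Zsink.
- split; last by move=> H; lia.
  by split => // H; lia.
Qed.

End Main.


Theorem mainTheorem7 (K : fieldType) (n : nat) (b : bool) (M : rep K n)
    (c : V n) (d r : nat) :
  (3 <= n)%N ->
  fin_supp M ->
  indecomposable b M ->
  regular b M ->
  (* M is a sink module with center c and radius r, d = d(M) *)
  is_diam M d -> sink_module b M -> vcenter M c -> d./2 = r ->
  exists d' : nat,
    [/\ is_diam (sigma b M) d',
        (d <= d' + 2)%N /\ (d' <= d)%N,
        (* case (1) *)
        [/\ (d' + 2 = d)%N <-> sink_module (~~ b) (sigma b M),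
            sink_module (~~ b) (sigma b M) <-> complete M c r &
            (d' + 2 = d)%N -> vcenter (sigma b M) c],
        (* case (2) *)
        ((d' + 1 = d)%N <-> flow_module (sigma b M)) /\
        ((d' + 1 = d)%N ->
           exists c' : V n,
             ecenter (sigma b M) c c' /\
             exists p : seq (V n),
               [/\ tpath p, size p = r.+1, nth (vroot n) p 0 = c,
                   nth (vroot n) p 1 = c' & ~~ sinkb (~~ b) (nth (vroot n) p r)]) &
        (* case (3) *)
        ((d' = d)%N <-> source_module (~~ b) (sigma b M)) /\
        ((d' = d)%N -> vcenter (sigma b M) c)].
Proof.
move=> _ _ Hind Hreg Hdiam Hsink Hcen Hr.
case: (Hdiam) => [[p [Hp Hs]] Hmax].
have Hdp : diam_path M p by split => // q /Hmax; rewrite Hs.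
case: (Hcen p Hdp); rewrite Hs /= => Hodd Hc.
have Hd2 : d = r.*2.
  by have := odd_double_half d; rewrite (negbTE Hodd) add0n Hr => <-.
have Hpc : nth (vroot n) p r = c by rewrite -Hr.
case: (classic (forall z, ht c z = r -> ~~ (rdim (sigma b M) z != 0%N))) => HA.
  by exists (d - 2)%N; apply: (caseA Hind Hreg Hdiam Hsink Hp Hs Hd2 Hpc HA).
have [z0 [Hz0 Hs0]] : exists z0, ht c z0 = r /\ rdim (sigma b M) z0 != 0%N.
  apply: NNPP => H; apply: HA => z Hz; apply/negP => Hsz; apply: H; by exists z.
case: (classic (exists z1, [/\ ht c z1 = r, rdim (sigma b M) z1 != 0%N &
    iter r.-1 (par c) z0 != iter r.-1 (par c) z1])) => HB.
  case: HB => z1 [Hz1 Hs1 Hne].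
  by exists d; apply: (caseB1 Hind Hreg Hdiam Hsink Hp Hs Hd2 Hpc Hz0 Hs0 Hz1 Hs1 Hne).
exists d.-1; apply: (caseB2 Hind Hreg Hdiam Hsink Hp Hs Hd2 Hpc Hz0 Hs0).
move=> z Hz Hsz; apply/eqP; apply: NNPP => H; apply: HB; exists z; split => //.
by rewrite eq_sym; apply/negP.
Qed.
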